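(* Fix an $s \times t$ matrix $A$. There exists a polynomial $p$ (depending only on $A$) such that for every $\epsilon > 0$, with $\delta = 1/p(\epsilon^{-1})$: if an $s \times n$ matrix $T$ contains $\epsilon n$ pairwise-disjoint copies of $A$, then the total number of copies of $A$ in $T$ is at least $\delta n^t$.
   Context: Matrices have ordered rows and columns. A copy of $A$ in $T$ is an $s\times t$ submatrix of $T$ (obtained by selecting $t$ columns $c_1<\dots<c_t$, keeping all $s$ rows, in order) equal to $A$; copies are pairwise disjoint if no entry of $T$ lies in two of them. *)

(* Defs.v *)
From HB Require Import structures.
From mathcomp Require Import all_boot all_order all_algebra.
Set Implicit Arguments. Unset Strict Implicit. Unset Printing Implicit Defensive.
Import Order.TTheory GRing.Theory Num.Theory.

Definition incr_sel (t n : nat) (f : {ffun 'I_t -> 'I_n}) : bool :=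
  [forall j1 : 'I_t, forall j2 : 'I_t, (j1 < j2)%N ==> (f j1 < f j2)%N].

Definition is_copy (T : eqType) (s t n : nat) (A : 'M[T]_(s, t)) (M : 'M[T]_(s, n))
    (f : {ffun 'I_t -> 'I_n}) : bool :=
  incr_sel f && [forall i : 'I_s, forall j : 'I_t, M i (f j) == A i j].

Definition copies (T : eqType) (s t n : nat) (A : 'M[T]_(s, t)) (M : 'M[T]_(s, n))
  : {set {ffun 'I_t -> 'I_n}} := [set f | is_copy A M f].

Definition copy_entries (s t n : nat) (f : {ffun 'I_t -> 'I_n})
  : {set 'I_s * 'I_n} := [set (i, f j) | i : 'I_s, j : 'I_t].

Definition pairwise_disjoint (s t n : nat) (C : {set {ffun 'I_t -> 'I_n}}) : Prop :=
  forall f g, f \in C -> g \in C -> f != g ->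
    [disjoint copy_entries s f & copy_entries s g].

(* Main.v *)
Require Import Defs.
From HB Require Import structures.
From mathcomp Require Import all_boot all_order all_algebra.
From mathcomp Require Import zify ring lra.
Set Implicit Arguments. Unset Strict Implicit. Unset Printing Implicit Defensive.

Section Core.
Variables (T : eqType) (s t' n : nat) (A : 'M[T]_(s, t'.+1)) (M : 'M[T]_(s, n)).
Local Notation t := t'.+1.
Local Notation fT := {ffun 'I_t -> 'I_n}.
Variable C : {set fT}.
Hypothesis HC : forall f, f \in C -> is_copy A M f.
Hypothesis HI : forall f g, f \in C -> g \in C -> forall j, f j = g j -> f = g.
Variable m : nat.
Hypothesis m_gt0 : 0 < m.
Hypothesis HmC : m * t <= #|C|.

Definition g (X : {set fT}) (j : 'I_t) (a : nat) := #|[set c in X | (c j <= a)%N]|.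
Definition thr (X : {set fT}) (j : 'I_t) := find (fun a => m <= g X j a) (iota 0 n).
Fixpoint D (j : nat) : {set fT} :=
  if j is j'.+1 then [set c in D j' | thr (D j') (inord j') < c (inord j')] else C.
Definition S (j : nat) := [set c in D j | c (inord j) <= thr (D j) (inord j)].

Lemma DC j : D j \subset C.
Proof.
elim: j => [|j IH] //=; apply: subset_trans IH; apply/subsetP => c; rewrite inE => /andP[]//.
Qed.

Lemma D_mono i j : i <= j -> D j \subset D i.
Proof.
move/subnK <-; elim: (j - i) => [|k IH] //; rewrite addSn /=.
apply: subset_trans IH; apply/subsetP => c; rewrite inE => /andP[]//.
Qed.

Lemma g_step (X : {set fT}) (j : 'I_t) a : X \subset C -> g X j a.+1 <= (g X j a).+1.
Proof.
move=> XC; rewrite /g.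
set B := [set c in X | c j == a.+1 :> nat].
have -> : [set c in X | c j <= a.+1] = [set c in X | c j <= a] :|: B.
  apply/setP => c; rewrite !inE leq_eqVlt ltnS; case: (c \in X) => //=; by rewrite orbC.
apply: leq_trans (leq_card_setU _ _) _.
rewrite -(addn1 #|[set c in X | c j <= a]|) leq_add2l; apply/card_le1_eqP => c1 c2; rewrite !inE.
move=> /andP[c1X /eqP e1] /andP[c2X /eqP e2].
apply: (@HI c2 c1 (subsetP XC _ c2X) (subsetP XC _ c1X) j); apply: ord_inj; lia.
Qed.

Lemma g0 (X : {set fT}) (j : 'I_t) : X \subset C -> g X j 0 <= 1.
Proof.
move=> XC; rewrite /g; apply/card_le1_eqP => c1 c2; rewrite !inE.
move=> /andP[c1X e1] /andP[c2X e2].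
apply: (@HI c2 c1 (subsetP XC _ c2X) (subsetP XC _ c1X) j); apply: ord_inj; lia.
Qed.

Lemma thr_spec (X : {set fT}) (j : 'I_t) : X \subset C -> m <= #|X| -> g X j (thr X j) = m.
Proof.
move=> XC mX.
have [c cX] : exists c, c \in X.
  by apply/set0Pn; rewrite -card_gt0; apply: leq_trans mX.
have n_gt0 : 0 < n by case: (c j) => k; case: n => //.
have hasX : has (fun a => m <= g X j a) (iota 0 n).
  apply/hasP; exists n.-1; first by rewrite mem_iota; lia.
  rewrite /g; apply: leq_trans mX _; apply: subset_leq_card; apply/subsetP => d dX.
  rewrite inE dX /=; case: (d j) => k /=; lia.
have := nth_find 0 hasX; rewrite -/(thr X j).
have lt_thr : thr X j < n by rewrite /thr; move: hasX; rewrite has_find size_iota.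
rewrite nth_iota // add0n => h1.
apply/eqP; rewrite eqn_leq h1 andbT.
case E : (thr X j) => [|a].
  by apply: leq_trans (@g0 X j XC) m_gt0.
have := before_find 0 (_ : a < find (fun a => m <= g X j a) (iota 0 n)).
rewrite -/(thr X j) E => /(_ (leqnn _)); rewrite nth_iota; last by lia.
rewrite add0n => /negbT; rewrite -ltnNge => h2.
by apply: leq_trans (@g_step X j a XC) h2.
Qed.

Lemma SD j : S j \subset D j.
Proof. by apply/subsetP => c; rewrite inE => /andP[]. Qed.

Lemma D_split j : m <= #|D j| -> #|D j.+1| + m = #|D j|.
Proof.
move=> mD.
rewrite -(cardsID [set c : fT | c (inord j) <= thr (D j) (inord j)] (D j)) addnC.
have -> : D j :&: [set c : fT | c (inord j) <= thr (D j) (inord j)] = S j.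
  by apply/setP => c; rewrite !inE.
have -> : D j :\: [set c : fT | c (inord j) <= thr (D j) (inord j)] = D j.+1.
  by apply/setP => c; rewrite !inE /= ltnNge andbC.
congr (_ + _); rewrite /S -/(g (D j) (inord j) _).
by rewrite thr_spec // DC.
Qed.

Lemma D_card j : j <= t -> #|C| <= #|D j| + j * m.
Proof.
elim: j => [|j IH] jt; first by rewrite mul0n addn0.
have IH' := IH (ltnW jt).
have h1 : j.+1 * m <= t * m by rewrite leq_mul2r jt orbT.
have h2 : m <= #|D j|.
  move: HmC h1 IH'; rewrite mulSn [t * m]mulnC; lia.
have := D_split h2; rewrite mulSn; lia.
Qed.

Lemma S_card j : j < t -> #|S j| = m.
Proof.
move=> jt; have h0 := D_card (ltnW jt).
have h1 : j.+1 * m <= t * m by rewrite leq_mul2r jt orbT.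
have h2 : m <= #|D j|.
  move: HmC h1 h0; rewrite mulSn [t * m]mulnC; lia.
rewrite /S -/(g (D j) (inord j) _).
by rewrite thr_spec // DC.
Qed.

Lemma chain j1 j2 c c' : j1 < j2 -> j2 < t -> c \in S j1 -> c' \in S j2 ->
  c (inord j1) < c' (inord j2).
Proof.
move=> j12 j2t cS c'S.
have c'D : c' \in D j1.+1 by apply: (subsetP (D_mono j12)); apply: (subsetP (SD j2)).
move: c'D; rewrite /= inE => /andP[_ h].
move: cS; rewrite inE => /andP[_ h'].
have c'C : c' \in C by apply: (subsetP (DC j2)); apply: (subsetP (SD j2)).
have := HC c'C; rewrite /is_copy /incr_sel => /andP[/forallP /(_ (inord j1)) /forallP /(_ (inord j2)) hi _].
have : nat_of_ord (inord j1 : 'I_t) < nat_of_ord (inord j2 : 'I_t).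
  by rewrite !inordK //; lia.
move=> /(implyP hi) h''.
exact: leq_ltn_trans h' (ltn_trans h h'').
Qed.

Lemma foldr_const (I : eqType) (f : I -> nat) (r : seq I) :
  (forall x, x \in r -> f x = m) -> foldr muln 1 (map f r) = m ^ size r.
Proof.
elim: r => [|x r IH] h //=; rewrite expnS h ?mem_head // IH // => y yr.
by apply: h; rewrite in_cons yr orbT.
Qed.

Definition Phi := [set phi : {ffun 'I_t -> fT} | [forall j : 'I_t, phi j \in S j]].

Lemma Phi_card : #|Phi| = m ^ t.
Proof.
have -> : #|Phi| = #|family (fun j : 'I_t => mem (S j))|.
  apply: eq_card => phi; rewrite inE; apply/forallP/familyP => h j; exact: h.
rewrite card_family /image_mem foldr_const; first by rewrite -cardE card_ord.
move=> j _; apply: S_card; exact: ltn_ord.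
Qed.

Definition F (phi : {ffun 'I_t -> fT}) : fT := [ffun j => phi j j].

Lemma count_copies : m ^ t <= #|copies A M|.
Proof.
rewrite -Phi_card -(@card_in_imset _ _ F).
  apply: subset_leq_card; apply/subsetP => f /imsetP[phi phiP ->].
  rewrite inE /is_copy; apply/andP; split.
    apply/forallP => j1; apply/forallP => j2; apply/implyP => j12.
    move: phiP; rewrite inE => /forallP h.
    rewrite !ffunE.
    have := chain j12 (ltn_ord j2) (h j1) (h j2); by rewrite !inord_val.
  apply/forallP => i; apply/forallP => j; rewrite ffunE.
  move: phiP; rewrite inE => /forallP /(_ j) h.
  have : phi j \in C by apply: (subsetP (DC j)); apply: (subsetP (SD j)).
  move=> /HC /andP[_ /forallP /(_ i) /forallP /(_ j)].
  done.
move=> phi psi; rewrite !inE => /forallP hphi /forallP hpsi e.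
apply/ffunP => j.
have pC : phi j \in C by apply: (subsetP (DC j)); apply: (subsetP (SD j)).
have qC : psi j \in C by apply: (subsetP (DC j)); apply: (subsetP (SD j)).
apply: (@HI _ _ pC qC j).
by have := congr1 (fun f : fT => f j) e; rewrite /F !ffunE.
Qed.

End Core.

Lemma key (T : eqType) (s t' n : nat) (A : 'M[T]_(s, t'.+1)) (M : 'M[T]_(s, n))
  (C : {set {ffun 'I_t'.+1 -> 'I_n}}) :
  (forall f, f \in C -> is_copy A M f) ->
  (forall f g, f \in C -> g \in C -> forall j, f j = g j -> f = g) ->
  #|C| ^ t'.+1 <= (2 * t'.+1) ^ t'.+1 * #|copies A M|.
Proof.
move=> HC HI.
have CC : #|C| <= #|copies A M|.
  apply: subset_leq_card; apply/subsetP => f fC; rewrite inE; exact: HC.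
set k := #|C| in CC *.
set t := t'.+1.
have hdiv := divn_eq k t.
have hmod : k %% t < t by apply: ltn_pmod.
case E : (k %/ t) => [|m].
  rewrite E mul0n add0n in hdiv.
  case: (posnP k) => [->|kpos]; first by rewrite exp0n.
  apply: (@leq_trans (t ^ t)).
    rewrite leq_exp2r //; lia.
  rewrite -[t ^ t]muln1; apply: leq_mul; last exact: leq_trans kpos CC.
  by rewrite leq_exp2r //; lia.
have h1 : m.+1 * t <= k by rewrite hdiv E leq_addr.
have h2 : k <= 2 * t * m.+1.
  rewrite hdiv E; move: hmod; rewrite mulSn; nia.
apply: (@leq_trans ((2 * t * m.+1) ^ t)); first by rewrite leq_exp2r.
rewrite expnMn leq_mul2l; apply/orP; right.
exact: (count_copies HC HI (ltn0Sn m) h1).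
Qed.

Import Order.TTheory GRing.Theory Num.Theory.

Lemma bound_pos (T : eqType) (s' t' n : nat) (A : 'M[T]_(s'.+1, t'.+1)) (M : 'M[T]_(s'.+1, n))
  (C : {set {ffun 'I_t'.+1 -> 'I_n}}) :
  (forall f, f \in C -> is_copy A M f) -> pairwise_disjoint s'.+1 C ->
  #|C| ^ t'.+1 <= (2 * t'.+1) ^ t'.+1 * #|copies A M|.
Proof.
move=> HC Hd; apply: key HC _ => f g fC gC j e.
apply/eqP; apply/negPn/negP => fg.
have H := @disjointFr _ _ _ (ord0, f j) (Hd f g fC gC fg).
have h1 : (ord0, f j) \in copy_entries s'.+1 f.
  by apply/imset2P; exists ord0 j.
have h2 : (ord0, f j) \in copy_entries s'.+1 g.
  by rewrite e; apply/imset2P; exists ord0 j.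
by rewrite (H h1) in h2.
Qed.

Lemma bound_s0 (T : eqType) (t' n : nat) (A : 'M[T]_(0, t'.+1)) (M : 'M[T]_(0, n)) :
  t'.+1 <= n -> n ^ t'.+1 <= (2 * t'.+1) ^ (t'.+1 + t'.+1) * #|copies A M|.
Proof.
set t := t'.+1 => tn.
case: n M tn => [|n'] M tn; first by rewrite exp0n.
set n := n'.+1.
pose q := n %/ t.
have q_pos : 0 < q by rewrite divn_gt0.
have lt_b : forall (b : 'I_q) (j : 'I_t), b * t + j < n.
  move=> b j; have hb := ltn_ord b; have hj := ltn_ord j.
  have : b.+1 * t <= q * t by rewrite leq_mul2r hb orbT.
  have := leq_divM n t; rewrite -/q mulSn; lia.
pose blk (b : 'I_q) : {ffun 'I_t -> 'I_n} := [ffun j : 'I_t => inord (b * t + j)].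
have blkE : forall b j, nat_of_ord (blk b j) = b * t + j.
  by move=> b j; rewrite ffunE inordK //; apply: lt_b.
pose B := [set blk b | b in 'I_q].
have blk_inj : injective blk.
  move=> b1 b2 e; have := congr1 (fun f : {ffun 'I_t -> 'I_n} => nat_of_ord (f ord0)) e.
  rewrite /= !blkE /= !addn0 => /eqP; rewrite eqn_pmul2r // => /eqP; exact: ord_inj.
have cardB : #|B| = q by rewrite card_imset // card_ord.
have HCB : forall f, f \in B -> is_copy A M f.
  move=> f /imsetP[b _ ->]; rewrite /is_copy; apply/andP; split.
    apply/forallP => j1; apply/forallP => j2; apply/implyP => j12.
    by rewrite !blkE ltn_add2l.
  by apply/forallP => -[].
have HIB : forall f g, f \in B -> g \in B -> forall j, f j = g j -> f = g.
  move=> f g /imsetP[b1 _ ->] /imsetP[b2 _ ->] j e.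
  have := congr1 (@nat_of_ord _) e; rewrite !blkE => /eqP; rewrite eqn_add2r eqn_pmul2r //.
  by move/eqP => /ord_inj ->.
have K := @key T 0 t' n A M B HCB HIB.
rewrite cardB in K.
have hn : n <= 2 * t * q.
  have := divn_eq n t; have := ltn_pmod n (ltn0Sn t'); rewrite -/q.
  have : t <= q * t by rewrite leq_pmull.
  nia.
apply: (@leq_trans ((2 * t * q) ^ t)); first by rewrite leq_exp2r.
by rewrite expnMn expnD -mulnA leq_mul2l K orbT.
Qed.

Local Open Scope ring_scope.

Lemma claim (R : realFieldType) (T : eqType) (s t : nat) (A : 'M[T]_(s, t)) (n : nat)
  (M : 'M[T]_(s, n)) (C : {set {ffun 'I_t -> 'I_n}}) (eps : R) :
  0 < eps -> (forall f, f \in C -> is_copy A M f) -> pairwise_disjoint s C ->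
  eps * n%:R <= (#|C|)%:R ->
  (n ^ t <= (2 * t) ^ (t + t) * #|copies A M|)%N \/
  (eps * n%:R) ^+ t <= ((2 * t) ^ (t + t) * #|copies A M|)%:R.
Proof.
move=> eps0; case: t A M C => [|t'] A M C HC Hd Hle.
  left; have -> : (n ^ 0 = 1)%N by [].
  have -> : ((2 * 0) ^ (0 + 0) = 1)%N by [].
  rewrite mul1n card_gt0; apply/set0Pn.
  have : (0 < #|{ffun 'I_0 -> 'I_n}|)%N by rewrite card_ffun !card_ord expn0.
  case/card_gt0P => f _; exists f; rewrite inE /is_copy; apply/andP; split.
    by apply/forallP => -[].
  by apply/forallP => i; apply/forallP => -[].
have cop_le : forall x, (x <= (2 * t'.+1) ^ t'.+1 * #|copies A M| ->
                          x <= (2 * t'.+1) ^ (t'.+1 + t'.+1) * #|copies A M|)%N.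
  move=> x hx; apply: leq_trans hx _; rewrite expnD -mulnA leq_pmull //.
  by rewrite expn_gt0 muln_gt0.
case: s A M C HC Hd Hle cop_le => [|s'] A M C HC Hd Hle cop_le.
  case: (leqP t'.+1 n) => tn; first by left; apply: bound_s0.
  case: (posnP n) => [n0|npos]; first by left; subst n; rewrite exp0n.
  have C0 : #|C| = 0%N.
    apply/eqP; rewrite cards_eq0; apply/eqP/setP => f; rewrite inE.
    apply/negbTE/negP => fC; have := HC f fC; rewrite /is_copy => /andP[hi _].
    have finj : injective f.
      move=> j1 j2 e; apply: ord_inj; case: (ltngtP j1 j2) => // h.
        move: hi => /forallP /(_ j1) /forallP /(_ j2) /implyP /(_ h).
        by rewrite e ltnn.
      move: hi => /forallP /(_ j2) /forallP /(_ j1) /implyP /(_ h).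
      by rewrite e ltnn.
    have := leq_card f finj; rewrite !card_ord => h; lia.
  move: Hle; rewrite C0 => Hle.
  have : 0 < eps * n%:R by rewrite mulr_gt0 // ltr0n.
  by rewrite ltNge Hle.
right.
have hb := bound_pos HC Hd.
apply: le_trans (_ : (#|C| ^ t'.+1)%:R <= _).
  rewrite natrX; apply: lerXn2r => //.
    by rewrite nnegrE mulr_ge0 // ?ler0n // ltW.
  by rewrite nnegrE ler0n.
by rewrite ler_nat; apply: cop_le.
Qed.


Theorem mainTheorem7 (R : realFieldType) (T : eqType) (s t : nat) (A : 'M[T]_(s, t)) :
  exists p : {poly R},
    (forall x : R, 0 < x -> 0 < p.[x]) /\
    forall (eps : R), 0 < eps ->
    forall (n : nat) (M : 'M[T]_(s, n)),
      (exists C : {set {ffun 'I_t -> 'I_n}},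
         (forall f, f \in C -> is_copy A M f) /\
         pairwise_disjoint s C /\
         eps * n%:R <= (#|C|)%:R) ->
      (p.[eps^-1])^-1 * (n%:R) ^+ t <= (#|copies A M|)%:R.
Proof.
pose K := ((2 * t) ^ (t + t))%N.
have K0 : (0 < K)%N.
  rewrite /K; case: (t) => [|t'] //; by rewrite expn_gt0 muln_gt0.
exists ((K%:R)%:P * ('X^t + 1)).
have pos : forall x : R, 0 < x -> 0 < ((K%:R)%:P * ('X^t + 1)).[x].
  move=> x x0; rewrite !hornerE; apply: mulr_gt0; first by rewrite ltr0n.
  exact: ltr_wpDl (exprn_ge0 _ (ltW x0)) ltr01.
split => // eps eps0 n M [C [HC [Hd Hle]]].
rewrite ler_pdivrMl; last by apply: pos; rewrite invr_gt0.
rewrite !hornerE.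
have x0 : 0 <= eps^-1 ^+ t by rewrite exprn_ge0 // invr_ge0 ltW.
have k0 : 0 <= (K%:R : R) by rewrite ler0n.
have c0 : 0 <= (#|copies A M|%:R : R) by rewrite ler0n.
have hx := mulr_ge0 (mulr_ge0 k0 c0) x0.
case: (claim eps0 HC Hd Hle) => h.
  have h' : n%:R ^+ t <= (K%:R : R) * #|copies A M|%:R.
    by rewrite -natrX -natrM ler_nat.
  nra.
have e : (n%:R : R) ^+ t = eps^-1 ^+ t * (eps * n%:R) ^+ t.
  by rewrite exprMn mulrA -exprMn mulVf ?expr1n ?mul1r // gt_eqF.
have h' : eps^-1 ^+ t * (eps * n%:R) ^+ t <= eps^-1 ^+ t * ((K%:R : R) * #|copies A M|%:R).
  by rewrite ler_wpM2l // -natrM.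
rewrite e; nra.
Qed.
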